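(* Let $M$ be an $n\times n$ row-stochastic (transition) matrix whose entries can be computed to arbitrary precision locally, distributed so that machine $i$ holds row $i$. Let $k$ be a power of $2$ with $k=O(n^{c_3})$ for a constant $c_3>0$, and let $\beta=\Omega(n^{-c_4})$ for a constant $c_4>0$. Then in the CongestedClique model one can compute, in $\tilde{O}(n^{\alpha})$ rounds, a matrix $\widehat{M}$ (machine $i$ holding row $i$) with $M^k[i,j]-\beta\le \widehat{M}[i,j]\le M^k[i,j]$ for all $i,j$ (subtractive error at most $\beta$).
   Context: The CongestedClique model: $n$ machines with IDs $1,\dots,n$; computation proceeds in synchronous rounds; in each round every machine performs arbitrary local computation and then sends a possibly different message of $O(\log n)$ bits to every other machine; complexity is the number of rounds. $\alpha$ denotes an exponent such that the product of two $n\times n$ matrices with $O(\log n)$-bit entries, machine $i$ holding row $i$ of each, can be computed (machine $i$ ending with row $i$ of the product) in $O(n^\alpha)$ rounds (currently $\alpha\approx 0.158$). $\tilde{O}(f)=O(f\cdot\mathrm{poly}\log n)$. *)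

(* Defs.v *)
From Stdlib Require Import Reals.
From HB Require Import structures.
From mathcomp Require Import all_boot all_order all_algebra.
From mathcomp Require Import Rstruct.
Set Implicit Arguments. Unset Strict Implicit. Unset Printing Implicit Defensive.
Import Order.TTheory GRing.Theory Num.Theory.
Local Open Scope ring_scope.

(* Each machine has an arbitrary local state
   (arbitrary local computation), starts from its ID and its local input,
   and in round r sends to every machine j a bit string (which may depend on
   j), then updates its state from the messages it received. *)
Unset Implicit Arguments.
Record CCAlg (n : nat) (I O : Type) : Type := CCA {
  cc_state : Type;
  cc_init : 'I_n -> I -> cc_state;
  (* cc_send r i s j : message sent in round r by machine i (in state s) to j *)
  cc_send : nat -> 'I_n -> cc_state -> 'I_n -> seq bool;
  (* cc_recv r i s m : new state of machine i after round r, m j = msg from j *)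
  cc_recv : nat -> 'I_n -> cc_state -> ('I_n -> seq bool) -> cc_state;
  cc_out : 'I_n -> cc_state -> O }.
Arguments cc_state {n I O}.
Arguments cc_init {n I O}.
Arguments cc_send {n I O}.
Arguments cc_recv {n I O}.
Arguments cc_out {n I O}.
Set Implicit Arguments.

Fixpoint cc_run n I O (A : CCAlg n I O) (inp : 'I_n -> I) (r : nat)
  : 'I_n -> cc_state A :=
  match r with
  | 0%N => fun i => cc_init A i (inp i)
  | r'.+1 => fun i =>
      cc_recv A r' i (@cc_run n I O A inp r' i)
        (fun j => cc_send A r' j (@cc_run n I O A inp r' j) i)
  end.

Definition cc_output n I O (A : CCAlg n I O) (inp : 'I_n -> I) (R : nat)
  (i : 'I_n) : O := cc_out A i (cc_run A inp R i).

Definition cc_bandwidth n I O (A : CCAlg n I O) (B : nat) : Prop :=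
  forall r i s j, (size (cc_send A r i s j) <= B)%N.

Definition logbits (n : nat) : nat := (trunc_log 2 n).+1.

(* ---------- alpha: matrix-multiplication exponent ----------
   For every constant c, there is an O(log n)-bandwidth CongestedClique
   algorithm which, machine i holding row i of X and Y (integer matrices
   with entries of absolute value <= n^c, i.e. O(log n) bits), ends with
   machine i holding row i of X *m Y, in O(n^alpha) rounds. *)
Definition MatMulExponent (alpha : R) : Prop :=
  forall c : nat, exists (b : nat) (K : R) (N0 : nat) (Rnd : nat -> nat)
    (A : forall n : nat, CCAlg n (('I_n -> int) * ('I_n -> int)) ('I_n -> int)),
    forall n : nat, (N0 <= n)%N ->
      cc_bandwidth (A n) (b * logbits n) /\
      (Rnd n)%:R <= K * Rpower n%:R alpha /\
      forall X Y : 'M[int]_n,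
        (forall i j, (`|X i j| <= n ^ c)%N) ->
        (forall i j, (`|Y i j| <= n ^ c)%N) ->
        forall i : 'I_n,
          cc_output (A n) (fun i0 => (fun j => X i0 j, fun j => Y i0 j)) (Rnd n) i
          = (fun j => (X *m Y) i j).

Definition row_stochastic n (M : 'M[R]_n) : Prop :=
  (forall i j, 0 <= M i j) /\ (forall i, \sum_(j < n) M i j = 1).

(* Main.v *)
Require Import Defs.
From Stdlib Require Import Reals FunctionalExtensionality Lra Lia Psatz.
From HB Require Import structures.
From mathcomp Require Import all_boot all_order all_algebra.
From mathcomp Require Import Rstruct.
Import Order.TTheory GRing.Theory Num.Theory.
Module StdL.
Local Open Scope R_scope.

Lemma ln_le' x y : 0 < x -> x <= y -> ln x <= ln y.
Proof.
intros hx hxy; destruct (Rle_lt_or_eq_dec _ _ hxy) as [h|h].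
- left; apply ln_increasing; auto.
- subst; lra.
Qed.

Lemma Rpower_pos x y : 0 < Rpower x y.
Proof. unfold Rpower; apply exp_pos. Qed.

Lemma asym (c3 c4 C1 C2 x kk bb : R) (c0 : nat) :
  1 <= x -> 0 < C2 -> c3 + c4 + 2 <= INR c0 -> 2 * C1 <= C2 * x ->
  kk <= C1 * Rpower x c3 -> C2 * Rpower x (- c4) <= bb ->
  2 * kk * x / x ^ c0 <= bb.
Proof.
intros hx hC2 hc0 hC hk hb.
assert (x0 : 0 < x) by lra.
rewrite -Rpower_pow; last lra.
set (E := Rpower x (INR c0)).
assert (E0 : 0 < E) by apply Rpower_pos.
apply Rle_trans with (C2 * Rpower x (- c4)); [|exact hb].
unfold Rdiv; apply Rmult_le_reg_r with E; [exact E0|].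
rewrite Rmult_assoc Rinv_l; last lra. rewrite Rmult_1_r.
unfold E; rewrite (Rmult_assoc C2) -Rpower_plus.
assert (p3 : 0 < Rpower x c3) by apply Rpower_pos.
apply Rle_trans with (2 * (C1 * Rpower x c3) * x).
{ apply Rmult_le_compat_r; lra. }
apply Rle_trans with ((C2 * x) * Rpower x c3 * x).
{ replace (2 * (C1 * Rpower x c3) * x) with ((2 * C1) * Rpower x c3 * x) by ring.
  apply Rmult_le_compat_r; [lra|]. apply Rmult_le_compat_r; lra. }
replace (C2 * x * Rpower x c3 * x) with (C2 * (Rpower x c3 * Rpower x 1 * Rpower x 1))
  by (rewrite Rpower_1; [ring|lra]).
rewrite -!Rpower_plus.
apply Rmult_le_compat_l; [lra|]. apply Rle_Rpower; lra.
Qed.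

Lemma expn_pow a b : (a ^ b)%N = Nat.pow a b.
Proof. elim: b => [|b IH] //=. by rewrite expnS IH mulnE. Qed.

Lemma rounds_bound (T Rm : nat) (x C1 c3 K alpha : R) :
  exp 1 <= x -> 0 < c3 -> INR Rm <= K * Rpower x alpha ->
  INR (2 ^ T) <= C1 * Rpower x c3 ->
  INR (T * Rm) <= ((Rabs (ln C1) + c3) / ln 2 * K) * Rpower x alpha * ln x.
Proof.
intros hx hc3 hR hT.
assert (x0 : 0 < x) by (pose proof (exp_pos 1); lra).
assert (lx : 1 <= ln x) by (rewrite -(ln_exp 1); apply ln_le'; [apply exp_pos|lra]).
assert (l2 : 0 < ln 2) by (pose proof ln_lt_2; lra).
assert (p3 : 0 < Rpower x c3) by apply Rpower_pos.
rewrite expn_pow pow_INR in hT. replace (INR 2) with 2 in hT by (simpl; ring).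
assert (h2 : 1 <= 2 ^ T) by (apply pow_R1_Rle; lra).
assert (hC1 : 0 < C1).
{ destruct (Rlt_le_dec 0 C1) as [h|h]; auto.
  assert (C1 * Rpower x c3 <= 0) by nra. lra. }
assert (hl : INR T * ln 2 <= ln C1 + c3 * ln x).
{ rewrite -ln_pow; last lra. rewrite -ln_Rpower -ln_mult; try assumption.
  apply ln_le'; [lra|auto]. }
assert (hA : ln C1 <= Rabs (ln C1) * ln x).
{ pose proof (Rle_abs (ln C1)). pose proof (Rabs_pos (ln C1)).
  apply Rle_trans with (Rabs (ln C1)); auto.
  rewrite -{1}(Rmult_1_r (Rabs (ln C1))). apply Rmult_le_compat_l; lra. }
assert (hT' : INR T <= (Rabs (ln C1) + c3) / ln 2 * ln x).
{ apply Rmult_le_reg_r with (ln 2); auto.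
  replace ((Rabs (ln C1) + c3) / ln 2 * ln x * ln 2) with ((Rabs (ln C1) + c3) * ln x)
    by (field; lra). lra. }
rewrite mulnE mult_INR.
replace ((Rabs (ln C1) + c3) / ln 2 * K * Rpower x alpha * ln x) with
  (((Rabs (ln C1) + c3) / ln 2 * ln x) * (K * Rpower x alpha)) by ring.
apply Rmult_le_compat; auto using pos_INR.
Qed.
End StdL.
Import StdL.

From mathcomp Require Import zify ring lra.
Local Open Scope ring_scope.

Definition IterAlg n I O (B : CCAlg n (('I_n -> int) * ('I_n -> int)) ('I_n -> int))
  (Rr : nat) (g0 : 'I_n -> I -> ('I_n -> int)) (g : 'I_n -> ('I_n -> int) -> ('I_n -> int))
  (h : 'I_n -> ('I_n -> int) -> O) : CCAlg n I O :=
 @CCA n I O (('I_n -> int) * cc_state B)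
   (fun i x => let v := g0 i x in (v, cc_init B i (v, v)))
   (fun r i s j => cc_send B (r %% Rr)%N i s.2 j)
   (fun r i s m => let s' := cc_recv B (r %% Rr)%N i s.2 m in
       if ((r %% Rr).+1 == Rr)%N then let v' := g i (cc_out B i s') in (v', cc_init B i (v',v')) else (s.1, s'))
   (fun i s => h i s.1).

Section VS.
Variables (n : nat) (I : Type) (B : CCAlg n (('I_n -> int) * ('I_n -> int)) ('I_n -> int))
  (Rr : nat) (g0 : 'I_n -> I -> ('I_n -> int)) (g : 'I_n -> ('I_n -> int) -> ('I_n -> int))
  (inp : 'I_n -> I).
Fixpoint vseq (t : nat) : 'I_n -> ('I_n -> int) :=
  match t with
  | 0%N => fun i => g0 i (inp i)
  | t'.+1 => fun i => g i (cc_output B (fun i0 => (vseq t' i0, vseq t' i0)) Rr i)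
  end.
End VS.
Arguments vseq {n I}.

Lemma IterAlg_run n I O B Rr g0 g h (inp : 'I_n -> I) : (0 < Rr)%N ->
  forall N i, cc_run (@IterAlg n I O B Rr g0 g h) inp N i =
   (vseq B Rr g0 g inp (N %/ Rr) i,
    cc_run B (fun i0 => (vseq B Rr g0 g inp (N %/ Rr) i0, vseq B Rr g0 g inp (N %/ Rr) i0)) (N %% Rr) i).
Proof.
move=> Rpos; elim=> [|N IH] i.
  by rewrite div0n mod0n.
have IH' := functional_extensionality _ _ IH.
rewrite [cc_run _ _ N.+1]/= IH' /=.
set t := (N %/ Rr)%N.
set w := (fun i0 => (vseq B Rr g0 g inp t i0, vseq B Rr g0 g inp t i0)).
have ltr : (N %% Rr < Rr)%N by rewrite ltn_mod.
rewrite modnS divnS //.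
case Hd: (Rr %| N.+1)%N.
- have HR : (N %% Rr).+1 = Rr.
    have Hm : ((N %% Rr).+1 %% Rr = 0)%N.
      by rewrite -addn1 modnDml addn1; apply/eqP.
    move: ltr; rewrite leq_eqVlt => /orP [/eqP //|lt2].
    by move: Hm; rewrite modn_small.
  have HR' : ((N %% Rr).+1 == Rr) = true by rewrite HR eqxx.
  rewrite HR' add1n /=.
  have E : cc_recv B (N %% Rr) i (cc_run B w (N %% Rr) i)
     (fun j => cc_send B (N %% Rr) j (cc_run B w (N %% Rr) j) i) = cc_run B w Rr i.
    by transitivity (cc_run B w (N %% Rr).+1 i); [by [] | by rewrite HR].
  by rewrite E.
- have HR : ((N %% Rr).+1 == Rr) = false.
    apply/negbTE/negP => /eqP HR; move: Hd.
    by rewrite /dvdn -addn1 -modnDml addn1 HR modnn.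
  by rewrite HR add0n.
Qed.
Arguments IterAlg {n I O}.

Lemma rowsum_mul n (X Y : 'M[R]_n) i :
  \sum_(j < n) (X *m Y) i j = \sum_(l < n) X i l * \sum_(j < n) Y l j.
Proof.
under eq_bigr do rewrite mxE.
rewrite exchange_big /=; apply: eq_bigr => l _; by rewrite mulr_sumr.
Qed.

Lemma stoch_mul n (X Y : 'M[R]_n) :
  row_stochastic X -> row_stochastic Y -> row_stochastic (X *m Y).
Proof.
move=> [X0 X1] [Y0 Y1]; split.
  by move=> i j; rewrite mxE; apply: sumr_ge0 => l _; apply: mulr_ge0.
move=> i; rewrite rowsum_mul -(X1 i); apply: eq_bigr => l _; by rewrite Y1 mulr1.
Qed.

Lemma pow2_eq n (M : 'M[R]_n) t : M ^+ (2 ^ t.+1) = M ^+ (2 ^ t) *m M ^+ (2 ^ t).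
Proof. by rewrite expnS mulnC exprM expr2 mulmxE. Qed.

Lemma stoch_pow2 n (M : 'M[R]_n) : row_stochastic M -> forall t, row_stochastic (M ^+ (2 ^ t)).
Proof.
move=> HM; elim=> [|t IH]; first by rewrite expn0 expr1.
by rewrite pow2_eq; apply: stoch_mul.
Qed.

Section Approx.
Variables (n : nat) (M : 'M[R]_n) (P : nat).
Hypothesis HM : row_stochastic M.
Hypothesis HP : (0 < P)%N.

Fixpoint Am (t : nat) : 'M[int]_n :=
  match t with
  | 0%N => \matrix_(i, j) Num.floor (M i j * P%:R)
  | t'.+1 => \matrix_(i, j) (((Am t' *m Am t') i j) %/ P%:Z)%Z
  end.

Lemma Am_inv t : (forall i j, 0 <= Am t i j) /\ (forall i, \sum_(j < n) Am t i j <= P%:Z).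
Proof.
have Pz : 0 < P%:Z by rewrite ltz_nat.
have PR : 0 < P%:R :> R by rewrite ltr0n.
case: HM => M0 M1.
elim: t => [|t [A0 A1]] /=.
  split=> [i j|i]; rewrite ?mxE.
    by rewrite floor_ge0; apply: mulr_ge0 => //; apply: ltW.
  rewrite -(ler_int R) rmorph_sum /=.
  apply: (le_trans (y := \sum_(j < n) M i j * P%:R)).
    by apply: ler_sum => j _; rewrite mxE; apply: floor_le.
  by rewrite -mulr_suml M1 mul1r.
split=> [i j|i].
  rewrite mxE divz_ge0 // mxE; apply: sumr_ge0 => l _; exact: mulr_ge0.
rewrite -(ler_pM2l Pz).
apply: (le_trans (y := \sum_(j < n) (Am t *m Am t) i j)).
  rewrite mulr_sumr; apply: ler_sum => j _; rewrite mxE mulrC.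
  by apply: lez_floor; rewrite gt_eqF.
under eq_bigr do rewrite mxE.
rewrite exchange_big /=.
apply: (le_trans (y := \sum_(l < n) Am t i l * P%:Z)).
  apply: ler_sum => l _; rewrite -mulr_sumr; apply: ler_wpM2l; [exact: A0 | exact: A1].
by rewrite -mulr_suml mulrC; apply: ler_wpM2l => //; apply: ltW.
Qed.


Definition Bm t : 'M[R]_n := \matrix_(i, j) ((Am t i j)%:~R / P%:R).
Definition Nm t : 'M[R]_n := M ^+ (2 ^ t).

Let PR : 0 < P%:R :> R. Proof. by rewrite ltr0n. Qed.

Lemma Bm_ge0 t i j : 0 <= Bm t i j.
Proof.
rewrite mxE; apply: divr_ge0; last exact: ltW.
by rewrite ler0z; case: (Am_inv t) => A0 _; apply: A0.
Qed.

Lemma Bm_sum t i : \sum_(j < n) Bm t i j <= 1.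
Proof.
under eq_bigr do rewrite mxE.
have E : \sum_(j < n) (Am t i j)%:~R = (\sum_(j < n) Am t i j)%:~R :> R by rewrite rmorph_sum.
rewrite -mulr_suml E.
rewrite ler_pdivrMr // mul1r -[P%:R]/(P%:Z%:~R) ler_int.
by case: (Am_inv t) => _ A1; apply: A1.
Qed.

Lemma Bm_step t i j :
  Bm t.+1 i j <= (Bm t *m Bm t) i j /\ (Bm t *m Bm t) i j - Bm t.+1 i j <= 1 / P%:R.
Proof.
set S := (Am t *m Am t) i j.
have HBB : (Bm t *m Bm t) i j = (S%:~R / P%:R) / P%:R.
  rewrite /S !mxE rmorph_sum /= mulr_suml mulr_suml; apply: eq_bigr => l _.
  by rewrite !mxE rmorphM /=; field; rewrite gt_eqF.
have HB' : Bm t.+1 i j = ((S %/ P%:Z)%Z)%:~R / P%:R by rewrite mxE /= mxE.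
set q := (S %/ P%:Z)%Z in HB'.
have Pz : 0 < P%:Z by rewrite ltz_nat.
have h1 : q * P%:Z <= S by apply: lez_floor; rewrite gt_eqF.
have h2 : S < (q + 1) * P%:Z by apply: ltz_ceil.
have h1' : q%:~R <= S%:~R / P%:R :> R.
  by rewrite ler_pdivlMr // -[P%:R]/(P%:Z%:~R) -rmorphM /= ler_int.
have h2' : S%:~R / P%:R <= q%:~R + 1 :> R.
  rewrite ler_pdivrMr // -[P%:R]/(P%:Z%:~R) -[1]/(1%:~R) -rmorphD -rmorphM /= ler_int.
  exact: ltW.
rewrite HBB HB'; split.
  by rewrite ler_pM2r ?invr_gt0.
rewrite -mulrBl ler_pM2r ?invr_gt0 //; lra.
Qed.

Lemma floor_approx (x : R) : 
  (Num.floor (x * P%:R))%:~R / P%:R <= x /\ x - (Num.floor (x * P%:R))%:~R / P%:R <= 1 / P%:R.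
Proof.
have h1 := floor_le (x * P%:R).
have h2 := floorD1_gt (x * P%:R).
rewrite rmorphD /= in h2.
set f := (Num.floor (x * P%:R))%:~R in h1 h2 *.
split.
  by rewrite ler_pdivrMr.
have -> : x = (x * P%:R) / P%:R by field; rewrite gt_eqF.
rewrite -mulrBl ler_pM2r ?invr_gt0 //; lra.
Qed.

Lemma sum_const_le (c : R) (F : 'I_n -> R) : (forall j, F j <= c) -> \sum_(j < n) F j <= n%:R * c.
Proof.
move=> H; apply: (le_trans (y := \sum_(j < n) c)); first by apply: ler_sum.
by rewrite sumr_const card_ord mulr_natl.
Qed.

Lemma Bm_err t :
  (forall i j, Bm t i j <= Nm t i j) /\
  (forall i, \sum_(j < n) (Nm t i j - Bm t i j) <= (2 ^+ t.+1 - 1) * (n%:R / P%:R)).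
Proof.
elim: t => [|t [IH1 IH2]].
  rewrite /Nm expn0 expr1; split.
    by move=> i j; rewrite mxE /= mxE; case: (floor_approx (M i j)).
  move=> i; rewrite expr1 (_ : 2 - 1 = 1 :> R); last by lra.
  rewrite mul1r (_ : n%:R / P%:R = n%:R * (1 / P%:R)); last by rewrite mul1r.
  apply: sum_const_le => j; rewrite mxE /= mxE; by case: (floor_approx (M i j)).
have St := @stoch_pow2 _ M HM t; case: St => N0 N1.
have NN : Nm t.+1 = Nm t *m Nm t by rewrite /Nm pow2_eq.
split.
  move=> i j; rewrite NN; case: (Bm_step t i j) => h _; apply: (le_trans h).
  rewrite !mxE; apply: ler_sum => l _; apply: ler_pM; by [apply: Bm_ge0|apply: Bm_ge0|].
move=> i; pose e := (2 ^+ t.+1 - 1) * (n%:R / (P%:R : R)).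
have e0 : 0 <= e.
  apply: (le_trans _ (IH2 i)); apply: sumr_ge0 => j _; rewrite subr_ge0; exact: IH1.
have split1 : \sum_(j < n) (Nm t.+1 i j - Bm t.+1 i j) =
   \sum_(j < n) ((Nm t *m Nm t) i j - (Bm t *m Bm t) i j) +
   \sum_(j < n) ((Bm t *m Bm t) i j - Bm t.+1 i j).
  by rewrite -big_split /= NN; apply: eq_bigr => j _; ring.
have part2 : \sum_(j < n) ((Bm t *m Bm t) i j - Bm t.+1 i j) <= n%:R * (1 / P%:R).
  by apply: sum_const_le => j; case: (Bm_step t i j).
have part1 : \sum_(j < n) ((Nm t *m Nm t) i j - (Bm t *m Bm t) i j) <= e + e.
  have -> : \sum_(j < n) ((Nm t *m Nm t) i j - (Bm t *m Bm t) i j) =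
     \sum_(l < n) ((Nm t i l - Bm t i l) * \sum_(j < n) Nm t l j
                   + Bm t i l * \sum_(j < n) (Nm t l j - Bm t l j)).
    rewrite sumrB !rowsum_mul -sumrB; apply: eq_bigr => l _.
    rewrite sumrB; ring.
  rewrite big_split /=; apply: lerD.
    under eq_bigr do rewrite N1 mulr1; exact: IH2.
  apply: (le_trans (y := \sum_(l < n) Bm t i l * e)).
    by apply: ler_sum => l _; apply: ler_wpM2l; [apply: Bm_ge0 | apply: IH2].
  rewrite -mulr_suml; apply: (le_trans (y := 1 * e)); last by rewrite mul1r.
  by apply: ler_wpM2r => //; apply: Bm_sum.
rewrite split1; apply: (le_trans (lerD part1 part2)).
rewrite /e ?RmultE ?RminusE ?RdivE ?RplusE (exprS _ t.+1); set y := 2 ^+ t.+1; rewrite le_eqVlt; apply/orP; left; apply/eqP.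
by field; rewrite gt_eqF.
Qed.

End Approx.

Lemma mm_pos n c (Amm : CCAlg n (('I_n -> int) * ('I_n -> int)) ('I_n -> int)) Rn :
  (1 < n)%N ->
  (forall X Y : 'M[int]_n, (forall i j, (`|X i j| <= n ^ c)%N) ->
     (forall i j, (`|Y i j| <= n ^ c)%N) -> forall i : 'I_n,
     cc_output Amm (fun i0 => (fun j => X i0 j, fun j => Y i0 j)) Rn i = (fun j => (X *m Y) i j)) ->
  (0 < Rn)%N.
Proof.
move=> n1 H; rewrite lt0n; apply/eqP => R0; subst Rn.
have n0 : (0 < n)%N by apply: ltn_trans n1.
pose i0 : 'I_n := Ordinal n0.
pose i1 : 'I_n := Ordinal n1.
have d01 : (i0 == i1) = false by [].
pose X : 'M[int]_n := \matrix_(i, j) (if (i == i0) && (j == i1) then 1 else 0).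
pose Y2 : 'M[int]_n := \matrix_(i, j) (if (i == i1) && (j == i0) then 1 else 0).
have nc : (1 <= n ^ c)%N by rewrite expn_gt0 n0.
have bX : forall i j, (`|X i j| <= n ^ c)%N by move=> i j; rewrite mxE; case: ifP.
have bY2 : forall i j, (`|Y2 i j| <= n ^ c)%N by move=> i j; rewrite mxE; case: ifP.
have bY1 : forall i j, (`|(0%R : 'M[int]_n) i j| <= n ^ c)%N by move=> i j; rewrite mxE.
have E1 := H X 0 bX bY1 i0.
have E2 := H X Y2 bX bY2 i0.
have Ein : (fun i => (fun j => X i j, fun j => (0%R : 'M[int]_n) i j)) i0 =
           (fun i => (fun j => X i j, fun j => Y2 i j)) i0.
  congr (_, _); apply: functional_extensionality => j; by rewrite !mxE d01.
have : (X *m 0) i0 i0 = (X *m Y2) i0 i0.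
  have := congr1 (fun f => f i0) E1; have := congr1 (fun f => f i0) E2.
  rewrite /cc_output /= Ein => <- <- //.
rewrite mulmx0 [in RHS]mxE (bigD1 i1) //= big1.
  by rewrite !mxE !eqxx /= addr0.
by move=> l /negbTE nl; rewrite !mxE nl andbF mulr0.
Qed.

Arguments Am {n}. Arguments Bm {n}. Arguments Nm {n}.
Arguments Am_inv {n M P}. Arguments Bm_err {n M P}.

Lemma term_le_sum n (F : 'I_n -> int) j : (forall l, 0 <= F l) -> F j <= \sum_(l < n) F l.
Proof.
move=> H; rewrite (bigD1 j) //= lerDl; apply: sumr_ge0 => l _; exact: H.
Qed.

Lemma term_le_sumR n (F : 'I_n -> R) j : (forall l, 0 <= F l) -> F j <= \sum_(l < n) F l.
Proof.
move=> H; rewrite (bigD1 j) //= lerDl; apply: sumr_ge0 => l _; exact: H.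
Qed.

Lemma Am_bound n (M : 'M[R]_n) P (HM : row_stochastic M) (HP : (0 < P)%N) t i j :
  (`|Am M P t i j| <= P)%N.
Proof.
case: (Am_inv HM HP t) => A0 A1.
have h1 := A0 i j.
have h2 : Am M P t i j <= P%:Z by apply: le_trans (A1 i); apply: term_le_sum.
move: h1 h2; set a := Am M P t i j; lia.
Qed.

Lemma vseq_Am n c (Amm : CCAlg n (('I_n -> int) * ('I_n -> int)) ('I_n -> int)) Rn
  (M : 'M[R]_n) (HM : row_stochastic M) (n0 : (0 < n)%N) :
  (forall X Y : 'M[int]_n, (forall i j, (`|X i j| <= n ^ c)%N) ->
     (forall i j, (`|Y i j| <= n ^ c)%N) -> forall i : 'I_n,
     cc_output Amm (fun i0 => (fun j => X i0 j, fun j => Y i0 j)) Rn i = (fun j => (X *m Y) i j)) ->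
  forall t, vseq Amm Rn (fun _ row => fun j => Num.floor (row j * (n ^ c)%N%:R))
     (fun _ w => fun j => (w j %/ (n ^ c)%N%:Z)%Z) (fun i0 j0 => M i0 j0) t
   = fun i j => Am M (n ^ c) t i j.
Proof.
move=> Hc; have HP : (0 < n ^ c)%N by rewrite expn_gt0 n0.
elim=> [|t IH].
  apply: functional_extensionality => i; apply: functional_extensionality => j.
  by rewrite /= mxE.
apply: functional_extensionality => i; apply: functional_extensionality => j.
rewrite /= IH Hc; try by move=> i1 j1; apply: Am_bound.
by rewrite mxE.
Qed.

Theorem mainTheorem8 (alpha c3 c4 : R) (k : nat -> nat) (beta : nat -> R) :
  MatMulExponent alpha ->
  0 < c3 -> 0 < c4 ->
  (forall n, exists e : nat, k n = (2 ^ e)%N) ->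
  (exists (C : R) (N : nat), forall n, (N <= n)%N ->
      (k n)%:R <= C * Rpower n%:R c3) ->
  (exists (C : R) (N : nat), 0 < C /\ forall n, (N <= n)%N ->
      C * Rpower n%:R (- c4) <= beta n) ->
  exists (b : nat) (K : R) (d : nat) (N0 : nat) (Rnd : nat -> nat)
    (A : forall n : nat, CCAlg n ('I_n -> R) ('I_n -> R)),
    forall n : nat, (N0 <= n)%N ->
      cc_bandwidth (A n) (b * logbits n) /\
      (Rnd n)%:R <= K * Rpower n%:R alpha * (ln n%:R) ^+ d /\
      forall M : 'M[R]_n, row_stochastic M ->
        forall i j : 'I_n,
          (M ^+ k n) i j - beta n
            <= cc_output (A n) (fun i0 => fun j0 => M i0 j0) (Rnd n) i j
            <= (M ^+ k n) i j.
Proof.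
move=> Hmm Hc3 Hc4 Hk2 [C1 [N1 Hk]] [C2 [N2 [C2pos Hb]]].
have [c0 Hc0] : exists c0 : nat, Rle (c3 + c4 + 2) (INR c0).
  case: (INR_unbounded (c3 + c4 + 2)) => m Hm; exists m; exact: Rlt_le.
have [Nc HNc] : exists Nc : nat, Rle (2 * C1 / C2) (INR Nc).
  case: (INR_unbounded (2 * C1 / C2)) => m Hm; exists m; exact: Rlt_le.
case: (Hmm c0) => b [K [Nmm [Rm [Amm Hspec]]]].
pose T n := trunc_log 2 (k n).
exists b, ((Rabs (ln C1) + c3) / ln 2 * K), 1%N,
  (maxn (maxn 3 Nmm) (maxn (maxn N1 N2) Nc)), (fun n => T n * Rm n)%N,
  (fun n => IterAlg (Amm n) (Rm n)
     (fun _ row => fun j => Num.floor (row j * (n ^ c0)%N%:R))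
     (fun _ w => fun j => (w j %/ (n ^ c0)%N%:Z)%Z)
     (fun _ v => fun j => (v j)%:~R / (n ^ c0)%N%:R)).
move=> n; rewrite !geq_max => /andP [/andP [n3 nNm] /andP [/andP [nN1 nN2] nNc]].
case: (Hspec n nNm) => Hbw [HR Hcorr].
have n0 : (0 < n)%N by apply: leq_trans n3.
have Rpos : (0 < Rm n)%N by apply: (@mm_pos n c0 (Amm n)) => //; apply: leq_trans n3.
have kT : k n = (2 ^ T n)%N by rewrite /T; case: (Hk2 n) => e ->; rewrite trunc_expnK.
have nR : Rle (IZR 3) (INR n) by have := le_INR 3 n (elimT ssrnat.leP n3); rewrite /INR; Lra.lra.
split; first by move=> r i s j; apply: Hbw.
split.
  rewrite expr1 -!INRE; apply/RleP; apply: rounds_bound.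
  - apply Rle_trans with (IZR 3); [exact exp_le_3 | exact nR].
  - by apply/RltP.
  - by rewrite !INRE; apply/RleP; exact: HR.
  - by rewrite -kT !INRE; apply/RleP; apply: Hk.
move=> M HM i j.
have HP : (0 < n ^ c0)%N by rewrite expn_gt0 n0.
have Hout : cc_output (IterAlg (Amm n) (Rm n)
     (fun _ row => fun j => Num.floor (row j * (n ^ c0)%N%:R))
     (fun _ w => fun j => (w j %/ (n ^ c0)%N%:Z)%Z)
     (fun _ v => fun j => (v j)%:~R / (n ^ c0)%N%:R)) (fun i0 j0 => M i0 j0) (T n * Rm n) i
   = fun j => Bm M (n ^ c0) (T n) i j.
  rewrite /cc_output IterAlg_run // mulnK //= (@vseq_Am n c0 (Amm n) (Rm n) M HM n0 Hcorr).
  by apply: functional_extensionality => j'; rewrite mxE.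
rewrite Hout kT.
case: (Bm_err HM HP (T n)) => E1 E2.
rewrite /Nm in E1 E2.
rewrite E1 andbT.
have hle : (M ^+ (2 ^ T n)) i j - Bm M (n ^ c0) (T n) i j <=
    \sum_(j0 < n) ((M ^+ (2 ^ T n)) i j0 - Bm M (n ^ c0) (T n) i j0).
  by apply: (@term_le_sumR n (fun j0 => (M ^+ (2 ^ T n)) i j0 - Bm M (n ^ c0) (T n) i j0)) => l; rewrite subr_ge0.
have hs := E2 i.
have nP0 : 0 <= n%:R / (n ^ c0)%N%:R :> R by apply: divr_ge0.
have h2 : (2 ^+ (T n).+1 - 1) * (n%:R / (n ^ c0)%N%:R) <= 2 ^+ (T n).+1 * (n%:R / (n ^ c0)%N%:R) :> R.
  by rewrite mulrBl mul1r lerBlDr lerDl.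
have hC : Rle (2 * C1) (C2 * INR n).
  apply/RleP; rewrite -ler_pdivrMl //; apply/RleP.
  rewrite mulrC; exact: (Rle_trans _ _ _ HNc (le_INR _ _ (elimT ssrnat.leP nNc))).
have hA := @asym c3 c4 C1 C2 (INR n) (INR (k n)) (beta n) c0.
have hA' : Rle (2 * INR (k n) * INR n / INR n ^ c0) (beta n).
  apply: hA => //.
  - have := nR; Lra.lra.
  - exact/RltP.
  - by apply/RleP; rewrite !INRE; apply: Hk.
  - by apply/RleP; rewrite INRE; apply: Hb.
move/RleP: hA'; rewrite !INRE RpowE RdivE IZRposE INRE /= => hB.
have eqX : 2 ^+ (T n).+1 * (n%:R / (n ^ c0)%N%:R) = 2 * (k n)%:R * n%:R / n%:R ^+ c0 :> R.
  rewrite exprS kT !natrX; set y := (2%:R : R) ^+ T n; set z := (n%:R : R) ^+ c0.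
  by rewrite mulrA -[2 * y * n%:R / z]mulrA.
have hX : 2 * (k n)%:R * n%:R / n%:R ^+ c0 <= beta n := hB.
move: hle hs h2 hX; rewrite eqX; lra.
Qed.
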